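(* As formal power series in $q$ (equivalently for $|q|<1$), $$\frac{1}{(q;q)_{\infty}} + 4\sum_{n=1}^{\infty}\frac{(-1)^nq^{n(n+1)/2}}{(q;q)_{n-1}(1-q^{2n})(q^{n+1};q)_{\infty}}=\sum_{n =0}^{\infty}\frac{(-1)^nq^{n(n+1)/2}(1-q^{n+1})}{(q;q)_n(1+q^{n+1})(q^{n+2};q)_{\infty}}.$$
   Context: $(z;q)_n=\prod_{j=0}^{n-1}(1-zq^j)$ and $(z;q)_\infty=\prod_{j\ge0}(1-zq^j)$. *)

(* Defs.v *)
From Stdlib Require Import Reals.
From Coquelicot Require Import Coquelicot.

Open Scope C_scope.

Definition cpow (q : C) (n : nat) : C := @pow_n C_Ring q n.

Fixpoint qpoch (z q : C) (n : nat) : C :=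
  match n with
  | O => RtoC 1
  | S m => qpoch z q m * (RtoC 1 - z * cpow q m)
  end.

Definition qpoch_inf (z q : C) : C :=
  @lim C_CompleteNormedModule (filtermap (fun n => qpoch z q n) eventually).

Definition lhs_term (q : C) (n : nat) : C :=
  cpow (RtoC (-1)) n * cpow q (n * (n + 1) / 2)
  / (qpoch q q (n - 1) * (RtoC 1 - cpow q (2 * n)) * qpoch_inf (cpow q (n + 1)) q).

Definition rhs_term (q : C) (n : nat) : C :=
  cpow (RtoC (-1)) n * cpow q (n * (n + 1) / 2) * (RtoC 1 - cpow q (n + 1))
  / (qpoch q q n * (RtoC 1 + cpow q (n + 1)) * qpoch_inf (cpow q (n + 2)) q).

(* Main.v *)
Require Import Defs.
From Stdlib Require Import Reals Lra Lia Classical.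
From Coquelicot Require Import Coquelicot.
Open Scope C_scope.

Lemma cpow_S q n : @eq C (cpow q (S n)) (q * cpow q n).
Proof. reflexivity. Qed.
Lemma cpow_0 q : @eq C (cpow q 0) 1.
Proof. reflexivity. Qed.

Lemma cpow_add q m n : @eq C (cpow q (m + n)) (cpow q m * cpow q n).
Proof. induction m. rewrite cpow_0. change (0+n)%nat with n. ring. change (S m + n)%nat with (S (m+n)). rewrite !cpow_S, IHm. ring. Qed.

Lemma Cmod_cpow q n : Cmod (cpow q n) = (Cmod q ^ n)%R.
Proof. induction n. rewrite cpow_0; apply Cmod_1.
rewrite cpow_S, Cmod_mult, IHn; simpl; ring. Qed.

Lemma qpoch_add z q n m : qpoch z q (n + m) = qpoch z q n * qpoch (z * cpow q n) q m.
Proof.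
induction m. rewrite Nat.add_0_r; simpl; ring.
rewrite Nat.add_succ_r; simpl qpoch; rewrite IHm, cpow_add; ring.
Qed.

Lemma Cmod_1_minus_le w : (Cmod (1 - w) <= 1 + Cmod w)%R.
Proof. unfold Cminus. eapply Rle_trans. apply Cmod_triangle. rewrite Cmod_opp, Cmod_1. lra. Qed.

Lemma qpoch_bound z q m : (Cmod z <= 1)%R -> (Cmod q < 1)%R ->
  (Cmod (qpoch z q m) <= exp ((1 - Cmod q ^ m) / (1 - Cmod q)))%R.
Proof.
intros Hz Hq. assert (0 <= Cmod q)%R by apply Cmod_ge_0.
induction m.
- simpl qpoch. rewrite pow_O, Cmod_1. replace ((1-1)/(1-Cmod q))%R with 0%R by (field; lra). rewrite exp_0; lra.
- simpl qpoch. rewrite Cmod_mult.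
  replace ((1 - Cmod q ^ S m) / (1 - Cmod q))%R with ((1 - Cmod q^m)/(1-Cmod q) + Cmod q^m)%R by (simpl; field; lra).
  rewrite exp_plus. apply Rmult_le_compat; try apply Cmod_ge_0. exact IHm.
  eapply Rle_trans. apply Cmod_1_minus_le. eapply Rle_trans. 2: apply exp_ineq1_le.
  rewrite Cmod_mult, Cmod_cpow. assert (0 <= Cmod q^m)%R by (apply pow_le; lra). nra.
Qed.

Lemma conv_iff (u : nat -> C) l : filterlim u eventually (locally l) <->
  (forall eps : posreal, exists N, forall n, (N <= n)%nat -> (Cmod (u n - l) < eps)%R).
Proof.
rewrite (filterlim_locally_ball_norm (K:=C_AbsRing) (U:=C_NormedModule)).
split; intros H eps; destruct (H eps) as [N HN]; exists N; intros n Hn; apply HN; auto.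
Qed.

Lemma lim_of (u : nat -> C) l : filterlim u eventually (locally l) ->
  @lim C_CompleteNormedModule (filtermap u eventually) = l.
Proof.
intros H.
apply (filterlim_locally_unique (K:=C_AbsRing) (V:=C_NormedModule) (F:=eventually) u); [|exact H].
apply filterlim_locally. intros eps.
apply (complete_cauchy (T:=C_CompleteNormedModule) (filtermap u eventually)).
apply filtermap_proper_filter. apply eventually_filter.
intros e. exists l. exact (proj1 (filterlim_locally (F:=eventually) u l) H e).
Qed.
Lemma exp_le_mono x y : (x <= y)%R -> (exp x <= exp y)%R.
Proof. intros H; destruct (Rle_lt_or_eq_dec _ _ H) as [h|h]. left; apply exp_increasing; auto. rewrite h; lra. Qed.

Lemma qpoch_bound2 z q m : (Cmod z <= 1)%R -> (Cmod q < 1)%R ->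
  (Cmod (qpoch z q m) <= exp (1 / (1 - Cmod q)))%R.
Proof.
intros Hz Hq. eapply Rle_trans. apply qpoch_bound; auto. apply exp_le_mono.
assert (0 <= Cmod q ^ m)%R by (apply pow_le, Cmod_ge_0).
unfold Rdiv. apply Rmult_le_compat_r. left; apply Rinv_0_lt_compat; lra. lra.
Qed.

Lemma qpoch_conv z q : (Cmod z <= 1)%R -> (Cmod q < 1)%R ->
  exists l, filterlim (qpoch z q) eventually (locally l).
Proof.
intros Hz Hq. set (B := exp (1 / (1 - Cmod q))).
assert (0 <= Cmod q)%R by apply Cmod_ge_0.
set (d := fun m => qpoch z q (S m) - qpoch z q m).
assert (Hd : ex_series (K:=C_AbsRing) (V:=C_NormedModule) d).
{ apply (ex_series_le (K:=C_AbsRing) (V:=C_CompleteNormedModule) d (fun m => B * Cmod q ^ m)%R).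
  - intros m. change (norm (d m)) with (Cmod (d m)).
    replace (d m) with (- (qpoch z q m * (z * cpow q m))) by (unfold d; simpl qpoch; ring).
    rewrite Cmod_opp, !Cmod_mult, Cmod_cpow.
    assert (Cmod (qpoch z q m) <= B)%R by (apply qpoch_bound2; auto).
    assert (0 <= Cmod q ^ m)%R by (apply pow_le; auto).
    assert (0 <= Cmod z)%R by apply Cmod_ge_0. assert (0 <= Cmod (qpoch z q m))%R by apply Cmod_ge_0.
    assert (Cmod z * Cmod q ^ m <= Cmod q ^ m)%R by nra.
    apply Rmult_le_compat; auto. apply Rmult_le_pos; auto.
  - apply (ex_series_scal_l (K:=R_AbsRing) (V:=R_NormedModule) B). apply ex_series_geom.
    rewrite Rabs_pos_eq; auto. }
destruct Hd as [Sd HS].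
assert (Hsum : forall n, sum_n d n = qpoch z q (S n) - qpoch z q 0).
{ induction n. rewrite sum_O. reflexivity. rewrite sum_Sn, IHn. unfold d. change (@eq C ((qpoch z q (S n) - qpoch z q 0) + (qpoch z q (S (S n)) - qpoch z q (S n))) (qpoch z q (S (S n)) - qpoch z q 0)). ring. }
exists (qpoch z q 0 + Sd). apply conv_iff. unfold is_series in HS.
pose proof (proj1 (conv_iff _ _) HS) as H1.
intros eps. destruct (H1 eps) as [N HN]. exists (S N). intros n Hn.
destruct n as [|k]. lia.
specialize (HN k ltac:(lia)). rewrite Hsum in HN.
replace (qpoch z q (S k) - (qpoch z q 0 + Sd)) with (qpoch z q (S k) - qpoch z q 0 - Sd) by ring. exact HN.
Qed.

Lemma qpoch_inf_spec z q : (Cmod z <= 1)%R -> (Cmod q < 1)%R ->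
  filterlim (qpoch z q) eventually (locally (qpoch_inf z q)).
Proof.
intros Hz Hq. destruct (qpoch_conv z q Hz Hq) as [l Hl].
assert (E: qpoch_inf z q = l) by exact (lim_of _ l Hl). rewrite E. exact Hl.
Qed.

Lemma conv_shift (u : nat -> C) l n : filterlim u eventually (locally l) ->
  filterlim (fun m => u (n + m)%nat) eventually (locally l).
Proof.
intros H. apply conv_iff. intros eps. destruct (proj1 (conv_iff u l) H eps) as [N HN].
exists N. intros m Hm. apply HN. lia.
Qed.

Lemma conv_scal (u : nat -> C) l c : filterlim u eventually (locally l) ->
  filterlim (fun m => c * u m) eventually (locally (c * l)).
Proof.
intros H. apply conv_iff. intros eps.
assert (Hc: (0 < Cmod c + 1)%R) by (pose proof (Cmod_ge_0 c); lra).
assert (He : (0 < eps / (Cmod c + 1))%R) by (apply Rdiv_lt_0_compat; [apply cond_pos|lra]).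
destruct (proj1 (conv_iff u l) H (mkposreal _ He)) as [N HN].
exists N. intros m Hm. specialize (HN m Hm). simpl in HN.
replace (c * u m - c * l) with (c * (u m - l)) by ring. rewrite Cmod_mult.
apply Rle_lt_trans with ((Cmod c + 1) * Cmod (u m - l))%R.
pose proof (Cmod_ge_0 (u m - l)); nra.
apply Rmult_lt_compat_l with (r := (Cmod c + 1)%R) in HN; auto.
replace ((Cmod c + 1) * (eps / (Cmod c + 1)))%R with (pos eps) in HN by (field; lra). exact HN.
Qed.

Lemma pow_le1 r n : (0 <= r <= 1)%R -> (r ^ n <= 1)%R.
Proof. intros H. rewrite <- (pow1 n). apply pow_incr. lra. Qed.

Lemma Cmod_cpow_le1 q n : (Cmod q < 1)%R -> (Cmod (cpow q n) <= 1)%R.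
Proof. intros Hq. rewrite Cmod_cpow. apply pow_le1. pose proof (Cmod_ge_0 q). lra. Qed.

Lemma Cmod_cpow_lt1 q n : (Cmod q < 1)%R -> (0 < n)%nat -> (Cmod (cpow q n) < 1)%R.
Proof. intros Hq Hn. rewrite Cmod_cpow. apply pow_lt_1_compat; auto. pose proof (Cmod_ge_0 q). lra. Qed.

Lemma qpoch_split q n : (Cmod q < 1)%R ->
  qpoch_inf q q = qpoch q q n * qpoch_inf (cpow q (n + 1)) q.
Proof.
intros Hq.
assert (HP := qpoch_inf_spec q q ltac:(lra) Hq).
assert (HQ := qpoch_inf_spec (cpow q (n+1)) q (Cmod_cpow_le1 q (n+1) Hq) Hq).
apply (conv_shift _ _ n) in HP.
apply (conv_scal _ _ (qpoch q q n)) in HQ.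
apply (filterlim_locally_unique (K:=C_AbsRing) (V:=C_NormedModule) (F:=eventually) (fun m => qpoch q q (n + m))); auto.
eapply filterlim_ext; [|exact HQ]. intros m. simpl.
rewrite qpoch_add. f_equal. f_equal. rewrite Nat.add_1_r. reflexivity.
Qed.

Lemma one_minus_neq0 w : (Cmod w < 1)%R -> 1 - w <> 0.
Proof. intros H E. assert (w = 1) by (replace w with (1 - (1 - w)) by ring; rewrite E; ring).
subst. rewrite Cmod_1 in H. lra. Qed.

Lemma one_plus_neq0 w : (Cmod w < 1)%R -> 1 + w <> 0.
Proof. intros H. replace (1 + w) with (1 - (- w)) by ring. apply one_minus_neq0. rewrite Cmod_opp; auto. Qed.

Lemma Cmult_neq0 (a b : C) : a <> 0 -> b <> 0 -> a * b <> 0.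
Proof. intros Ha Hb E. apply Hb. replace b with (Cinv a * (a * b)) by (field; auto). rewrite E. ring. Qed.

Lemma qpoch_neq0 q n : (Cmod q < 1)%R -> qpoch q q n <> 0.
Proof. intros Hq. induction n. simpl. apply C1_nz.
simpl qpoch. apply Cmult_neq0; auto. apply one_minus_neq0.
rewrite <- cpow_S. apply Cmod_cpow_lt1; auto; lia. Qed.

Lemma Cinv0 : Cinv 0 = 0.
Proof. unfold Cinv, RtoC; simpl. apply injective_projections; simpl; unfold Rdiv; ring. Qed.

Definition aa (q : C) (n : nat) : C := cpow (RtoC (-1)) n * cpow q (n * (n + 1) / 2).
Definition ff (q : C) (n : nat) : C := aa q n / (1 + cpow q n).

Lemma T_S n : (S n * (S n + 1) / 2 = n * (n + 1) / 2 + S n)%nat.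
Proof. replace (S n * (S n + 1))%nat with (n * (n + 1) + S n * 2)%nat by ring.
apply Nat.div_add. lia. Qed.

Lemma aa_S q n : aa q (S n) = - (aa q n * cpow q (S n)).
Proof. unfold aa. rewrite T_S, cpow_add, cpow_S. ring. Qed.

Lemma lhs_eq q n : (Cmod q < 1)%R ->
  lhs_term q (S n) = Cinv (qpoch_inf q q) * ff q (S n).
Proof.
intros Hq. rewrite (qpoch_split q (S n) Hq). unfold lhs_term, ff.
replace (S n - 1)%nat with n by lia. simpl qpoch. rewrite <- cpow_S.
replace (2 * S n)%nat with (S n + S n)%nat by lia. rewrite cpow_add.
set (w := cpow q (S n)). set (Q := qpoch_inf (cpow q (S n + 1)) q).
change (cpow (RtoC (-1)) (S n) * cpow q (S n * (S n + 1) / 2)) with (aa q (S n)).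
assert (Hw : (Cmod w < 1)%R) by (apply Cmod_cpow_lt1; auto; lia).
assert (H1 := one_minus_neq0 w Hw). assert (H2 := one_plus_neq0 w Hw).
assert (H3 := qpoch_neq0 q n Hq).
assert (H4 : 1 - w * w <> 0) by (replace (1 - w*w) with ((1 - w) * (1 + w)) by ring; apply Cmult_neq0; auto).
destruct (classic (Q = 0)) as [HQ|HQ].
- rewrite HQ. unfold Cdiv. rewrite !Cmult_0_r, Cinv0. ring.
- field. repeat split; auto.
Qed.

Lemma rhs_eq q n : (Cmod q < 1)%R ->
  rhs_term q n = Cinv (qpoch_inf q q) * (aa q n - aa q (S n) + 4 * ff q (S n)).
Proof.
intros Hq. rewrite (qpoch_split q (S n) Hq). unfold rhs_term, ff.
change (cpow (RtoC (-1)) n * cpow q (n * (n + 1) / 2)) with (aa q n).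
simpl qpoch. rewrite <- cpow_S. rewrite aa_S.
replace (S n + 1)%nat with (n + 2)%nat by lia. rewrite (Nat.add_1_r n).
set (w := cpow q (S n)). set (Q := qpoch_inf (cpow q (n + 2)) q). set (b := aa q n).
assert (Hw : (Cmod w < 1)%R) by (apply Cmod_cpow_lt1; auto; lia).
assert (H1 := one_minus_neq0 w Hw). assert (H2 := one_plus_neq0 w Hw).
assert (H3 := qpoch_neq0 q n Hq).
destruct (classic (Q = 0)) as [HQ|HQ].
- rewrite HQ. unfold Cdiv. rewrite !Cmult_0_r, Cinv0. ring.
- field. repeat split; auto.
Qed.

Lemma T_ge n : (n <= n * (n + 1) / 2)%nat.
Proof. apply Nat.div_le_lower_bound. lia. nia. Qed.

Lemma aa_bound q n : (Cmod q < 1)%R -> (Cmod (aa q n) <= Cmod q ^ n)%R.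
Proof.
intros Hq. pose proof (Cmod_ge_0 q). unfold aa. rewrite Cmod_mult, !Cmod_cpow, Cmod_R, Rabs_m1, pow1, Rmult_1_l.
pose proof (T_ge n). replace (n * (n + 1) / 2)%nat with (n + (n * (n + 1) / 2 - n))%nat by lia.
rewrite pow_add. assert (0 <= Cmod q ^ n)%R by (apply pow_le; auto).
assert (Cmod q ^ (n * (n + 1) / 2 - n) <= 1)%R by (apply pow_le1; lra).
assert (0 <= Cmod q ^ (n * (n + 1) / 2 - n))%R by (apply pow_le; auto). nra.
Qed.

Lemma ff_bound q n : (Cmod q < 1)%R -> (Cmod (ff q (S n)) <= / (1 - Cmod q) * Cmod q ^ n)%R.
Proof.
intros Hq. pose proof (Cmod_ge_0 q). set (w := cpow q (S n)).
assert (Hw : (Cmod w <= Cmod q)%R).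
{ unfold w. rewrite Cmod_cpow. simpl. assert (Cmod q ^ n <= 1)%R by (apply pow_le1; lra). nra. }
assert (H1 : (1 - Cmod q <= Cmod (1 + w))%R).
{ assert (Cmod 1 <= Cmod (1 + w) + Cmod (- w))%R.
  { replace (RtoC 1) with ((1 + w) + - w) at 1 by ring. apply Cmod_triangle. }
  rewrite Cmod_opp, Cmod_1 in H0. lra. }
assert (Hnz : 1 + w <> 0) by (apply one_plus_neq0; lra).
unfold ff. fold w. rewrite Cmod_div; auto.
assert (Ha := aa_bound q (S n) Hq). simpl in Ha.
assert (Cmod q ^ n <= 1)%R by (apply pow_le1; lra).
assert (0 <= Cmod q ^ n)%R by (apply pow_le; auto).
assert (Cmod (aa q (S n)) <= Cmod q ^ n)%R by nra.
unfold Rdiv. rewrite Rmult_comm. apply Rmult_le_compat; auto.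
left; apply Rinv_0_lt_compat; lra. apply Cmod_ge_0.
apply Rinv_le_contravar; lra.
Qed.

Theorem corollary4p1 (q : C) (hq : (Cmod q < 1)%R) :
  exists S1 S2 : C,
    is_series (fun n : nat => lhs_term q (S n)) S1 /\
    is_series (fun n : nat => rhs_term q n) S2 /\
    RtoC 1 / qpoch_inf q q + RtoC 4 * S1 = S2.
Proof.
pose proof (Cmod_ge_0 q) as Hr.
assert (Ha : ex_series (K:=C_AbsRing) (V:=C_NormedModule) (aa q)).
{ apply (ex_series_le (K:=C_AbsRing) (V:=C_CompleteNormedModule) _ (fun n => Cmod q ^ n)%R).
  intros n. apply aa_bound; auto. apply ex_series_geom. rewrite Rabs_pos_eq; auto. }
assert (Hf : ex_series (K:=C_AbsRing) (V:=C_NormedModule) (fun n => ff q (S n))).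
{ apply (ex_series_le (K:=C_AbsRing) (V:=C_CompleteNormedModule) _ (fun n => / (1 - Cmod q) * Cmod q ^ n)%R).
  intros n. apply ff_bound; auto.
  apply (ex_series_scal_l (K:=R_AbsRing) (V:=R_NormedModule)). apply ex_series_geom. rewrite Rabs_pos_eq; auto. }
destruct Ha as [A HA]. destruct Hf as [F HF].
assert (HA1 : is_series (K:=C_AbsRing) (V:=C_NormedModule) (fun n => aa q (S n)) (A - aa q 0)).
{ apply is_series_incr_1. assert (E : A - aa q 0 + aa q 0 = A) by ring.
  change (is_series (K:=C_AbsRing) (V:=C_NormedModule) (aa q) (A - aa q 0 + aa q 0)). rewrite E. exact HA. }
assert (Htel : is_series (K:=C_AbsRing) (V:=C_NormedModule) (fun n => aa q n - aa q (S n)) (RtoC 1)).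
{ pose proof (is_series_minus _ _ _ _ HA HA1) as H.
  assert (E : A + - (A - aa q 0) = 1) by (assert (aa q 0 = 1) by (unfold aa; change (0*(0+1)/2)%nat with 0%nat; rewrite !cpow_0; ring); rewrite H0; ring).
  change (is_series (K:=C_AbsRing) (V:=C_NormedModule) (fun n => aa q n + - aa q (S n)) (A + - (A - aa q 0))) in H.
  rewrite E in H. exact H. }
set (P := qpoch_inf q q).
exists (Cinv P * F), (Cinv P * (1 + 4 * F)).
split; [|split].
- apply (is_series_ext (fun n => scal (Cinv P) (ff q (S n)))).
  intros n. rewrite lhs_eq; auto.
  exact (is_series_scal (K:=C_AbsRing) (V:=C_NormedModule) (Cinv P) _ F HF).
- apply (is_series_ext (fun n => scal (Cinv P) (plus (aa q n - aa q (S n)) (scal (RtoC 4) (ff q (S n)))))).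
  intros n. rewrite rhs_eq; auto.
  exact (is_series_scal (K:=C_AbsRing) (V:=C_NormedModule) (Cinv P) _ _
    (is_series_plus _ _ _ _ Htel (is_series_scal (K:=C_AbsRing) (V:=C_NormedModule) (RtoC 4) _ F HF))).
- unfold Cdiv. ring.
Qed.
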